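(* Let $H=([n],E)$ be a hypergraph having at least one edge of cardinality greater than $2$, and assume $H$ has two disjoint edges. Then $\Delta_H$ is not Cohen–Macaulay over any field.
   Context: A hypergraph $H=([n],E)$ has vertex set $[n]$ and edge set $E$, a collection of nonempty subsets of $[n]$; standing assumptions: every vertex lies in some edge, no edge has cardinality 1, no edge is properly contained in another. The coloring complex $\Delta_H$ is the abstract simplicial complex whose vertices are the nonempty proper subsets of $[n]$ and whose faces are the chains $\emptyset\neq A_1\subsetneq\cdots\subsetneq A_l\neq[n]$ ($l\ge0$) such that, with $A_0=\emptyset$, $A_{l+1}=[n]$, some difference $A_i\setminus A_{i-1}$ ($1\le i\le l+1$) contains an edge of $H$. *)

(* Defs.v *)
From HB Require Import structures.
From mathcomp Require Import all_boot all_order all_algebra.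
Set Implicit Arguments. Unset Strict Implicit. Unset Printing Implicit Defensive.
Import GRing.Theory.
Local Open Scope ring_scope.

Definition hypergraph (n : nat) (E : {set {set 'I_n}}) : Prop :=
  (forall e, e \in E -> e != set0) /\
  (forall v : 'I_n, exists2 e, e \in E & v \in e) /\
  (forall e, e \in E -> #|e| != 1%N) /\
  (forall e f, e \in E -> f \in E -> ~~ (e \proper f)).

(* Vertices: nonempty proper subsets of [n]; a face is a chain
   A_1 < ... < A_l (a set of pairwise comparable such subsets) such that,
   with A_0 = empty, A_{l+1} = [n], some consecutive difference
   A_i \ A_{i-1} contains an edge.  "Consecutive" = B proper-below C in
   F + {empty,[n]} with no element of F strictly between them. *)
Definition coloring_face (n : nat) (E : {set {set 'I_n}})
    (F : {set {set 'I_n}}) : bool :=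
  [forall A in F, (A != set0) && (A != setT)] &&
  [forall A in F, forall B in F, (A \subset B) || (B \subset A)] &&
  [exists B in set0 |: (setT |: F), exists C in set0 |: (setT |: F),
     [&& B \proper C,
         [forall A in F, ~~ ((B \proper A) && (A \proper C))] &
         [exists e in E, e \subset C :\: B]]].

(* Faces are indexed by cardinality k
   (dimension k-1); the empty face gives the augmentation (reduced homology). *)
Section Homology.
Variables (K : fieldType) (V : finType).

Definition faces_of (D : pred {set V}) (k : nat) : {set {set V}} :=
  [set F | D F & #|F| == k].

(* Oriented boundary matrix from faces of size k.+1 to faces of size k,
   (row-vector convention), orientation given by enum_rank on V. *)
Definition bdry (D : pred {set V}) (k : nat) :
    'M[K]_(#|faces_of D k.+1|, #|faces_of D k|) :=
  \matrix_(i < #|faces_of D k.+1|, j < #|faces_of D k|)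
    let G : {set V} := enum_val i in let F : {set V} := enum_val j in
    if F \subset G then
      \sum_(x in G :\: F)
        (-1) ^+ #|[set y in G | (enum_rank y < enum_rank x)%N]|
    else 0.

Definition rank_out (D : pred {set V}) (k : nat) : nat :=
  if k is k'.+1 then \rank (bdry D k') else 0%N.

(* dimension over K of the reduced homology group in dimension k-1 *)
Definition rbetti (D : pred {set V}) (k : nat) : nat :=
  (#|faces_of D k| - rank_out D k - \rank (bdry D k))%N.

Definition link (D : pred {set V}) (F : {set V}) : pred {set V} :=
  fun G => [disjoint F & G] && D (F :|: G).

(* 1 + dimension: the maximal cardinality of a face *)
Definition maxsize (D : pred {set V}) : nat := \max_(G | D G) #|G|.

(* Cohen-Macaulay over K, via Reisner's criterion: for every face F,
   reduced homology of lk F vanishes in dimensions < dim lk F. *)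
Definition cohen_macaulay (D : pred {set V}) : Prop :=
  forall F, D F -> forall k, (k < maxsize (link D F))%N ->
    rbetti (link D F) k = 0%N.
End Homology.

(* Main.v *)
Require Import Defs.
From mathcomp Require Import all_boot all_order all_algebra zify.
Set Implicit Arguments. Unset Strict Implicit. Unset Printing Implicit Defensive.
Section H.
Import GRing.Theory.
Local Open Scope ring_scope.
Variables (K : fieldType) (V : finType) (L : pred {set V}).

Lemma card_rank_pair (x y : V) : x != y ->
  #|[set t in [set x; y] | (enum_rank t < enum_rank y)%N]| =
  (enum_rank x < enum_rank y)%N.
Proof.
move=> nxy.
have -> : [set t in [set x; y] | (enum_rank t < enum_rank y)%N] =
  if (enum_rank x < enum_rank y)%N then [set x] else set0.
  apply/setP => t; rewrite !inE.
  case: (boolP (t == x)) => [/eqP->|ntx] /=.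
    by case: ifP => _; rewrite ?inE ?eqxx.
  case: (boolP (t == y)) => [/eqP->|nty] /=; first by rewrite ltnn; case: ifP => _; rewrite ?inE // eq_sym (negbTE nxy).
  by case: ifP => _; rewrite ?inE // (negbTE ntx).
by case: ifP => _; rewrite ?cards1 ?cards0.
Qed.

Lemma bdry_kernel (w : {set V} -> K) :
  (forall x y, x != y -> L [set x; y] -> L [set x] /\ L [set y]) ->
  (forall x y, x != y -> L [set x; y] -> w [set x] = w [set y]) ->
  (\row_j w (enum_val j)) *m (bdry K L 1)^T = 0.
Proof.
move=> clos hw; apply/rowP => i; rewrite !mxE.
have := enum_valP i; rewrite inE => /andP[LG /cards2P[x [y [nxy defG]]]].
under eq_bigr => j _ do rewrite !mxE.
rewrite -(big_enum_val (fun S => w S * (if S \subset enum_val i then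
   \sum_(x0 in enum_val i :\: S)
          (-1) ^+ #|[set y0 in enum_val i | (enum_rank y0 < enum_rank x0)%N]|
         else 0))).
rewrite defG in LG *.
have [Lx Ly] := clos _ _ nxy LG.
have Fx : [set x] \in faces_of L 1 by rewrite inE Lx cards1.
have Fy : [set y] \in faces_of L 1 by rewrite inE Ly cards1.
have nxy' : [set y] != [set x] by apply/negP => /eqP/set1_inj/eqP; rewrite eq_sym (negbTE nxy).
rewrite (bigD1 [set x]) //= (bigD1 [set y]) /=; last by rewrite Fy nxy'.
rewrite [X in _ + (_ + X)]big1 ?addr0; last first.
  move=> S /andP[/andP[FS nSx] nSy]; case: ifP => [sSG|]; last by rewrite mulr0.
  move: FS; rewrite inE => /andP[_ /cards1P[z defS]].
  move: sSG; rewrite defS sub1set !inE => /orP[]/eqP zE.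
    by move: nSx; rewrite defS zE eqxx.
  by move: nSy; rewrite defS zE eqxx.
rewrite !sub1set !inE !eqxx orbT /=.
have -> : [set x; y] :\: [set x] = [set y].
  apply/setP => t; rewrite !inE; case: (eqVneq t x) => [->|_] /=; last by [].
  by rewrite (negbTE nxy).
have -> : [set x; y] :\: [set y] = [set x].
  apply/setP => t; rewrite !inE; case: (eqVneq t y) => [->|_] /=; last by rewrite orbF.
  by rewrite eq_sym (negbTE nxy).
rewrite !big_set1 card_rank_pair //.
have -> : [set y0 in [set x; y] | (enum_rank y0 < enum_rank x)%N] =
   [set y0 in [set y; x] | (enum_rank y0 < enum_rank x)%N].
  by apply/setP => t; rewrite !inE orbC.
rewrite card_rank_pair 1?eq_sym // (hw _ _ nxy LG).
case: (ltngtP (enum_rank x) (enum_rank y)) => h /=.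
- by rewrite expr1 expr0 mulrN1 mulr1 addNr.
- by rewrite expr1 expr0 mulrN1 mulr1 addrN.
- by move: h => /val_inj/enum_rank_inj/eqP; rewrite (negbTE nxy).
Qed.

Lemma faces0_card : (#|faces_of L 0| <= 1)%N.
Proof.
rewrite -(cards1 (set0 : {set V})); apply: subset_leq_card.
apply/subsetP => S; rewrite !inE => /andP[_ /eqP/cards0_eq ->]; by rewrite eqxx.
Qed.

Lemma betti1_pos (P : pred V) (p q : V) :
  (forall x y, x != y -> L [set x; y] -> L [set x] /\ L [set y]) ->
  (forall x y, x != y -> L [set x; y] -> P x = P y) ->
  L [set p] -> P p -> L [set q] -> ~~ P q -> rbetti K L 1 != 0%N.
Proof.
move=> clos hP Lp Pp Lq Pq.
pose w1 (S : {set V}) : K := ([exists x in S, P x] : nat)%:R.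
pose w2 (S : {set V}) : K := 1.
pose u1 : 'rV[K]_#|faces_of L 1| := \row_j w1 (enum_val j).
pose u2 : 'rV[K]_#|faces_of L 1| := \row_j w2 (enum_val j).
have Fp : [set p] \in faces_of L 1 by rewrite inE Lp cards1.
have Fq : [set q] \in faces_of L 1 by rewrite inE Lq cards1.
have w1E x : w1 [set x] = (P x : nat)%:R.
  rewrite /w1; congr (_ %:R); congr nat_of_bool.
  apply/existsP/idP => [[z /andP[]]|Px]; first by rewrite inE => /eqP->.
  by exists x; rewrite inE eqxx.
have k1 : (u1 <= kermx (bdry K L 1)^T)%MS.
  rewrite sub_kermx; apply/eqP/bdry_kernel => // x y nxy Lxy.
  by rewrite !w1E (hP _ _ nxy Lxy).
have k2 : (u2 <= kermx (bdry K L 1)^T)%MS.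
  by rewrite sub_kermx; apply/eqP/bdry_kernel.
set jp := enum_rank_in Fp [set p].
set jq := enum_rank_in Fp [set q].
have u1p : u1 0 jp = 1 by rewrite mxE /jp enum_rankK_in // w1E Pp.
have u1q : u1 0 jq = 0 by rewrite mxE /jq enum_rankK_in // w1E (negbTE Pq).
have u2q : u2 0 jq = 1 by rewrite mxE.
have r1 : \rank u1 = 1%N.
  rewrite rank_rV; apply/eqP; rewrite eqb1; apply/eqP => /rowP/(_ jp).
  by rewrite u1p mxE; apply/eqP; rewrite oner_neq0.
have nsub : ~~ (u2 <= u1)%MS.
  apply/negP => /sub_rVP[a] /rowP/(_ jq); rewrite u2q mxE u1q mulr0.
  by apply/eqP; rewrite oner_neq0.
have lt : (u1 < u1 + u2)%MS.
  rewrite ltmxEneq addsmxSl /=.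
  by rewrite addsmx_sub negb_and nsub orbT.
have r2 := rank_ltmx lt.
have r3 : (\rank (u1 + u2)%MS <= \rank (kermx (bdry K L 1)^T))%N.
  by apply: mxrankS; rewrite addsmx_sub k1 k2.
rewrite mxrank_ker mxrank_tr r1 in r2 r3.
have r0 : (rank_out K L 1 <= 1)%N.
  by rewrite /= (leq_trans (rank_leq_col _)) // faces0_card.
rewrite /rbetti.
have := rank_leq_col (bdry K L 1).
move: r0 r2 r3; set a := rank_out K L 1; set b := \rank _; set c := \rank (bdry K L 1); set N := #|_|.
move=> r0 r2 r3 r4. apply/eqP. lia.
Qed.
End H.


Section Crit.
Variables (n : nat) (E : {set {set 'I_n}}).

Definition chainb (F : {set {set 'I_n}}) :=
  [forall A in F, (A != set0) && (A != setT)] &&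
  [forall A in F, forall B in F, (A \subset B) || (B \subset A)].
Definition critb (F : {set {set 'I_n}}) :=
  [exists e in E, [forall A in F, (e \subset A) || [disjoint e & A]]].

Lemma ext_comp (F : {set {set 'I_n}}) B C :
  chainb F -> B \in set0 |: (setT |: F) -> C \in set0 |: (setT |: F) ->
  (B \subset C) || (C \subset B).
Proof.
case/andP=> _ /forall_inP hc; rewrite !inE => /orP[/eqP->|/orP[/eqP->|hB]].
- by rewrite sub0set.
- by rewrite subsetT orbT.
move=> /orP[/eqP->|/orP[/eqP->|hC]].
- by rewrite sub0set orbT.
- by rewrite subsetT.
by have /forall_inP := hc _ hB; apply.
Qed.

Lemma face_critE (F : {set {set 'I_n}}) :
  (forall e, e \in E -> e != set0) ->
  coloring_face E F = chainb F && critb F.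
Proof.
move=> ne0; rewrite /coloring_face -/(chainb F).
case: (boolP (chainb F)) => //= ch.
apply/idP/idP.
- case/exists_inP => B hB /exists_inP [C hC /and3P[pBC /forall_inP nb /exists_inP[e eE seC]]].
  apply/exists_inP; exists e => //; apply/forall_inP => A AF.
  have AF' : A \in set0 |: (setT |: F) by rewrite !inE AF !orbT.
  case/orP: (ext_comp ch AF' hB) => sAB.
    apply/orP; right; rewrite disjoint_subset.
    apply: (subset_trans seC); apply/subsetP => x; rewrite !inE => /andP[xB _].
    by apply/negP => xA; move/negP: xB; apply; apply: (subsetP sAB).
  case/orP: (ext_comp ch AF' hC) => sAC; last first.
    by apply/orP; left; apply: (subset_trans seC); apply: (subset_trans (subsetDl _ _)).
  have := nb A AF; rewrite !properEneq sAB sAC !andbT /=.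
  case: (eqVneq B A) => [eBA|nBA] /=; last first.
    case: (eqVneq A C) => [->|] //= _; apply/orP; left.
    by apply: (subset_trans seC); apply: subsetDl.
  move=> _; apply/orP; right; rewrite -eBA disjoint_subset.
  apply: (subset_trans seC); apply/subsetP => x; rewrite !inE => /andP[xB _].
  by rewrite xB.
- case/exists_inP => e eE /forall_inP he.
  set SB := set0 |: [set A in F | [disjoint e & A]].
  set SC := setT |: [set A in F | e \subset A].
  have SB0 : set0 \in SB by rewrite !inE eqxx.
  have SCT : setT \in SC by rewrite !inE eqxx.
  case: (arg_maxnP (fun A : {set 'I_n} => #|A|) SB0) => B BSB Bmax.
  case: (arg_minnP (fun A : {set 'I_n} => #|A|) SCT) => C CSC Cmin.
  have {}BSB : B \in SB by [].
  have {}CSC : C \in SC by [].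
  have BF : B \in set0 |: (setT |: F).
    move: BSB; rewrite /SB !inE => /orP[->//|/andP[-> _]]; by rewrite !orbT.
  have CF : C \in set0 |: (setT |: F).
    move: CSC; rewrite /SC !inE => /orP[->|/andP[-> _]]; by rewrite !orbT.
  have dB : [disjoint e & B].
    move: BSB; rewrite /SB !inE => /orP[/eqP->|/andP[_ ->]]; [by rewrite -setI_eq0 setI0 | by []].
  have sC : e \subset C.
    move: CSC; rewrite /SC !inE => /orP[/eqP->|/andP[_ ->]]; [exact: subsetT | by []].
  have nCB : ~~ (C \subset B).
    apply/negP => sCB; move: (ne0 _ eE); case/set0Pn => x xe.
    by move: dB; rewrite disjoint_subset => /subsetP/(_ x xe); rewrite inE (subsetP sCB) // (subsetP sC).
  have sBC : B \subset C by move: (ext_comp ch BF CF); rewrite (negbTE nCB) orbF.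
  apply/exists_inP; exists B => //; apply/exists_inP; exists C => //.
  apply/and3P; split.
  + by rewrite properE sBC.
  + apply/forall_inP => A AF; apply/negP => /andP[pBA pAC].
    have AF' : A \in set0 |: (setT |: F) by rewrite !inE AF !orbT.
    case/orP: (he A AF) => h.
      have ASC : A \in SC by rewrite /SC !inE AF h orbT.
      by have := leq_ltn_trans (Cmin A ASC) (proper_card pAC); rewrite ltnn.
    have ASB : A \in SB by rewrite /SB !inE AF h orbT.
    by have := leq_ltn_trans (Bmax A ASB) (proper_card pBA); rewrite ltnn.
  + apply/exists_inP; exists e => //; apply/subsetP => x xe.
    rewrite inE (subsetP sC) // andbT; apply/negP => xB.
    by move: dB; rewrite disjoint_subset => /subsetP/(_ x xe); rewrite inE xB.
Qed.
End Crit.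


Section Pre.
Variable n : nat.

Definition pre (R : {set 'I_n}) (k : nat) : {set 'I_n} :=
  R :|: [set x | (x \notin R) && (x < k)%N].
Definition chainR (R : {set 'I_n}) : {set {set 'I_n}} :=
  [set pre R (val k) | k : 'I_n] :\ setT.

Lemma pre_mono R k k' : (k <= k')%N -> pre R k \subset pre R k'.
Proof.
move=> kk; apply/subsetP => x; rewrite !inE => /orP[->//|/andP[-> /= xk]].
by rewrite (leq_trans xk kk) orbT.
Qed.

Lemma pre_comp R k k' : (pre R k \subset pre R k') || (pre R k' \subset pre R k).
Proof. by case: (leqP k k') => h; [rewrite pre_mono | rewrite (pre_mono R (ltnW h)) orbT]. Qed.

Lemma sub_pre (R : {set 'I_n}) k : R \subset pre R k.
Proof. exact: subsetUl. Qed.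

Lemma pre0 (R : {set 'I_n}) : pre R 0 = R.
Proof. by apply/setP => x; rewrite !inE ltn0 andbF orbF. Qed.

Lemma in_chainR (R : {set 'I_n}) (k : 'I_n) : pre R (val k) != setT -> pre R (val k) \in chainR R.
Proof. by move=> h; rewrite !inE h; apply/imsetP; exists k. Qed.

Lemma chainR_inv (R X : {set 'I_n}) : X \in chainR R -> X != setT /\ exists k : 'I_n, X = pre R k.
Proof. rewrite !inE => /andP[h]; case/imsetP => k _ e; rewrite e in h *; split; [exact: h | by exists k]. Qed.

Lemma key_pre (R A : {set 'I_n}) : (forall k : 'I_n, (A \subset pre R k) || (pre R k \subset A)) ->
  R \subset A -> A = setT \/ exists k : 'I_n, A = pre R k.
Proof.
move=> hc sRA.
case: (boolP (A == setT)) => [/eqP->|nAT]; [by left|right].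
have [m0 m0A] : exists m0, m0 \notin A.
  case: (pickP (fun x => x \notin A)) => [x hx|h]; first by exists x.
  move: nAT; rewrite eqEsubset subsetT /= => /negP[]; apply/subsetP => x _.
  exact/negbFE/(h x).
case: (@arg_minnP _ m0 (fun x => x \notin A) (fun x : 'I_n => val x) m0A) => m mA mmin.
exists m; apply/eqP; rewrite eqEsubset; apply/andP; split; last first.
  apply/subsetP => x; rewrite !inE => /orP[xR|/andP[_ xm]]; first exact: (subsetP sRA).
  by apply/negPn/negP => xA; have := mmin x xA; rewrite leqNgt xm.
apply/subsetP => x xA; rewrite !inE; case: (boolP (x \in R)) => //= xR.
rewrite ltnNge; apply/negP => mx.
have nxm : x != m by apply/negP => /eqP ex; move: mA; rewrite -ex xA.
have lt : (m < x)%N by rewrite ltn_neqAle mx andbT; apply/negP => /eqP/val_inj e; move: nxm; rewrite e eqxx.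
case/orP: (hc x) => h.
  by move: (subsetP h x xA); rewrite !inE (negbTE xR) ltnn.
have : m \in pre R x.
  rewrite !inE lt andbT; apply/orP; right; apply/negP => mR.
  by move: mA; rewrite (subsetP sRA).
by move/(subsetP h); rewrite (negbTE mA).
Qed.

Lemma sing_pre (R h : {set 'I_n}) (x y : 'I_n) : x \in h -> y \in h -> x != y ->
  [disjoint h & R] ->
  (forall k : 'I_n, pre R k != setT -> (h \subset pre R k) || [disjoint h & pre R k]) ->
  False.
Proof.
wlog lxy : x y / (x < y)%N.
  move=> W xh yh nxy; case: (ltngtP x y) => c; first exact: W xh yh nxy.
    by apply: (W y x c) => //; rewrite eq_sym.
  by move: nxy; rewrite (val_inj c) eqxx.
move=> xh yh nxy dhR hk.
have xR : x \notin R by apply/negP => xR; move: dhR; rewrite disjoint_subset => /subsetP/(_ x xh); rewrite inE xR.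
have yR : y \notin R by apply/negP => yR; move: dhR; rewrite disjoint_subset => /subsetP/(_ y yh); rewrite inE yR.
have ypre : y \notin pre R y by rewrite !inE (negbTE yR) ltnn.
have xpre : x \in pre R y by rewrite !inE xR lxy orbT.
have nT : pre R y != setT by apply/negP => /eqP e; move: ypre; rewrite e inE.
case/orP: (hk y nT) => H.
  by move: ypre; rewrite (subsetP H).
by move: H; rewrite disjoint_subset => /subsetP/(_ x xh); rewrite inE xpre.
Qed.

Lemma proper_R (R A : {set 'I_n}) (k0 : 'I_n) :
  (forall k : 'I_n, (A \subset pre R k) || (pre R k \subset A)) ->
  A \notin chainR R -> A != setT -> A \proper R.
Proof.
move=> hc nA nAT.
have c0 := hc (Ordinal (leq_ltn_trans (leq0n _) (ltn_ord k0))); rewrite /= pre0 in c0.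
have nRA : ~~ (R \subset A).
  apply/negP => sRA; case: (key_pre hc sRA) => [e|[k e]]; first by rewrite e eqxx in nAT.
  by move: nA; rewrite e in_chainR // -e.
rewrite (negbTE nRA) orbF in c0.
by rewrite properE c0 nRA.
Qed.
End Pre.


Lemma sub_face n (E : {set {set 'I_n}}) (F F' : {set {set 'I_n}}) :
  (forall e, e \in E -> e != set0) -> F' \subset F ->
  coloring_face E F -> coloring_face E F'.
Proof.
move=> ne0 sF; rewrite !face_critE // => /andP[/andP[/forall_inP h1 /forall_inP h2] /exists_inP[e eE /forall_inP he]].
apply/andP; split; first (apply/andP; split).
- by apply/forall_inP => A /(subsetP sF) /h1.
- apply/forall_inP => A /(subsetP sF) AF; apply/forall_inP => B /(subsetP sF) BF.
  by have /forall_inP := h2 A AF; apply.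
- by apply/exists_inP; exists e => //; apply/forall_inP => A /(subsetP sF) /he.
Qed.

Lemma link_clos n (E : {set {set 'I_n}}) (F : {set {set 'I_n}}) x y :
  (forall e, e \in E -> e != set0) ->
  link (coloring_face E) F [set x; y] -> link (coloring_face E) F [set x].
Proof.
move=> ne0; rewrite /link => /andP[d f]; apply/andP; split.
  by apply: (disjointWr _ d); rewrite sub1set !inE eqxx.
by apply: (sub_face ne0 _ f); apply: setUS; rewrite sub1set !inE eqxx.
Qed.

Lemma final n (E : {set {set 'I_n}}) (K : fieldType) (F : {set {set 'I_n}})
  (P : pred {set 'I_n}) p q x0 y0 :
  (forall e, e \in E -> e != set0) ->
  coloring_face E F ->
  link (coloring_face E) F [set p] -> P p ->
  link (coloring_face E) F [set q] -> ~~ P q ->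
  x0 != y0 -> link (coloring_face E) F [set x0; y0] ->
  (forall x y, x != y -> link (coloring_face E) F [set x; y] -> P x -> P y) ->
  ~ cohen_macaulay K (coloring_face E).
Proof.
move=> ne0 hF Lp Pp Lq Pq nxy0 L0 hP CM.
have ms : (1 < maxsize (link (coloring_face E) F))%N.
  have := @leq_bigmax_cond _ (fun G => link (coloring_face E) F G) (fun G => #|G|) _ L0.
  by rewrite cards2 nxy0.
have := CM F hF 1%N ms; apply/eqP.
apply: (@betti1_pos K _ _ P p q) => //.
- move=> x y nxy Lxy; split; first exact: link_clos Lxy.
  by apply: (@link_clos _ _ _ y x ne0); rewrite setUC.
- move=> x y nxy Lxy; apply/idP/idP; first exact: hP.
  by apply: hP; rewrite 1?eq_sym // setUC.
Qed.

Section Helpers.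
Variables (n : nat) (E : {set {set 'I_n}}).

Definition ok (h X : {set 'I_n}) := (h \subset X) || [disjoint h & X].
Definition comp (X Y : {set 'I_n}) := (X \subset Y) || (Y \subset X).

Lemma face_of (G : {set {set 'I_n}}) h :
  (forall e, e \in E -> e != set0) ->
  (forall X, X \in G -> (X != set0) && (X != setT)) ->
  (forall X Y, X \in G -> Y \in G -> comp X Y) ->
  h \in E -> (forall X, X \in G -> ok h X) -> coloring_face E G.
Proof.
move=> ne0 h1 h2 hE h3; rewrite face_critE //; apply/andP; split; first (apply/andP; split).
- by apply/forall_inP.
- by apply/forall_inP => X XG; apply/forall_inP => Y YG; apply: h2.
- by apply/exists_inP; exists h => //; apply/forall_inP.
Qed.

Lemma face_facts (G : {set {set 'I_n}}) :
  (forall e, e \in E -> e != set0) -> coloring_face E G ->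
  [/\ (forall X, X \in G -> (X != set0) && (X != setT)),
      (forall X Y, X \in G -> Y \in G -> comp X Y) &
      exists2 h, h \in E & forall X, X \in G -> ok h X].
Proof.
move=> ne0; rewrite face_critE // => /andP[/andP[/forall_inP h1 /forall_inP h2] /exists_inP[h hE /forall_inP h3]].
split => //; last by exists h.
by move=> X Y XG YG; have /forall_inP := h2 X XG; apply.
Qed.

Lemma two_elems (e : {set 'I_n}) : e != set0 -> #|e| != 1%N ->
  exists x y, [/\ x \in e, y \in e & x != y].
Proof.
move=> ne n1; apply/card_gt1P.
by move: ne n1; rewrite -card_gt0; case: #|e| => [|[|k]].
Qed.

Lemma chainR_props (R X : {set 'I_n}) : X \in chainR R ->
  [/\ X != setT, R \subset X & exists k : 'I_n, X = pre R k].
Proof. case/chainR_inv => nT [k e]; split => //; [rewrite e; exact: sub_pre | by exists k]. Qed.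
End Helpers.

Section Helpers2.
Variables (n : nat) (E : {set {set 'I_n}}).

Lemma edge_subR (R h : {set 'I_n}) (k0 : 'I_n) (G : {set {set 'I_n}}) :
  chainR R \subset G -> (forall X, X \in G -> ok h X) ->
  h != set0 -> #|h| != 1%N -> h \subset R.
Proof.
move=> sG hok ne n1; have [x [y [xh yh nxy]]] := two_elems ne n1.
have hk : forall k : 'I_n, pre R k != setT -> (h \subset pre R k) || [disjoint h & pre R k].
  by move=> k nT; apply: hok; apply: (subsetP sG); apply: in_chainR.
have okR : ok h R.
  case: (eqVneq R setT) => [->|nT]; first by rewrite /ok subsetT.
  have k00 : (0 < n)%N by apply: leq_ltn_trans (ltn_ord k0).
  have := hk (Ordinal k00); rewrite /= pre0; exact.
case/orP: okR => // d; exfalso; exact: (sing_pre xh yh nxy d hk).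
Qed.

Lemma comp_chainR (R X Y : {set 'I_n}) : X \subset R -> Y \in chainR R -> comp X Y.
Proof. by move=> sXR /chainR_props[_ sRY _]; rewrite /comp (subset_trans sXR sRY). Qed.

Lemma chainR_comp (R X Y : {set 'I_n}) : X \in chainR R -> Y \in chainR R -> comp X Y.
Proof. by move=> /chainR_props[_ _ [k ->]] /chainR_props[_ _ [k' ->]]; exact: pre_comp. Qed.

Lemma link_proper (R A : {set 'I_n}) (k0 : 'I_n) :
  A \notin chainR R -> A != setT -> (forall Y, Y \in chainR R -> comp A Y) ->
  A \proper R.
Proof.
move=> nA nT hc; apply: (@proper_R _ _ _ k0) => // k.
case: (eqVneq (pre R k) setT) => [->|nT']; first by rewrite subsetT.
by apply: hc; apply: in_chainR.
Qed.

Lemma set2E (F : {set {set 'I_n}}) A B : F :|: [set A; B] = A |: (B |: F).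
Proof. by apply/setP => X; rewrite !inE; case: (X \in F); case: (X == A); case: (X == B). Qed.
Lemma set1E (F : {set {set 'I_n}}) A : F :|: [set A] = A |: F.
Proof. by rewrite setUC. Qed.

Lemma sub_edge (hE : hypergraph E) h f : h \in E -> f \in E -> h \subset f -> h = f.
Proof.
case: hE => _ [_ [_ anti]] hE fE shf; apply/eqP; move: (anti _ _ hE fE).
by rewrite properEneq shf andbT negbK.
Qed.
End Helpers2.

Section Helpers3.
Variables (n : nat) (E : {set {set 'I_n}}).

Lemma disjP (T : finType) (A B : {set T}) z : [disjoint A & B] -> z \in A -> z \in B -> False.
Proof. by rewrite disjoint_subset => /subsetP h /h; rewrite inE => /negP. Qed.

Definition chainfam (G : {set {set 'I_n}}) :=
  (forall X, X \in G -> (X != set0) && (X != setT)) /\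
  (forall X Y, X \in G -> Y \in G -> comp X Y).

Lemma chainfam_add (G : {set {set 'I_n}}) A : chainfam G -> A != set0 -> A != setT ->
  (forall Y, Y \in G -> comp A Y) -> chainfam (A |: G).
Proof.
move=> [h1 h2] a1 a2 h3; split.
  by move=> X; rewrite in_setU1 => /orP[/eqP->|/h1]; rewrite ?a1 ?a2.
move=> X Y; rewrite !in_setU1 => /orP[/eqP->|XG] /orP[/eqP->|YG].
- by rewrite /comp subxx.
- exact: h3.
- by rewrite /comp orbC; apply: h3.
- exact: h2.
Qed.

Lemma face_chainfam (G : {set {set 'I_n}}) h :
  (forall e, e \in E -> e != set0) -> chainfam G -> h \in E ->
  (forall X, X \in G -> ok h X) -> coloring_face E G.
Proof. by move=> ne0 [h1 h2]; apply: face_of. Qed.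

Lemma ok_add (G : {set {set 'I_n}}) h A : ok h A -> (forall X, X \in G -> ok h X) ->
  forall X, X \in A |: G -> ok h X.
Proof. by move=> hA hG X; rewrite in_setU1 => /orP[/eqP->|/hG]. Qed.

Lemma link1 (F : {set {set 'I_n}}) A : A \notin F -> coloring_face E (A |: F) ->
  link (coloring_face E) F [set A].
Proof. by move=> nA f; rewrite /link set1E f andbT disjoint_sym disjoints1. Qed.

Lemma link2 (F : {set {set 'I_n}}) A B : A \notin F -> B \notin F -> coloring_face E (A |: (B |: F)) ->
  link (coloring_face E) F [set A; B].
Proof.
move=> nA nB f; rewrite /link set2E f andbT.
apply/pred0P => X /=; rewrite !inE; case: (eqVneq X A) => [->|_]; first by rewrite (negbTE nA).
by case: (eqVneq X B) => [->|_]; [rewrite (negbTE nB) | rewrite andbF].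
Qed.

Lemma link2_inv (F : {set {set 'I_n}}) A B : link (coloring_face E) F [set A; B] ->
  [/\ A \notin F, B \notin F & coloring_face E (A |: (B |: F))].
Proof.
rewrite /link set2E => /andP[d f]; split => //; apply/negP => XF.
  by apply: (disjP d XF); rewrite !inE eqxx.
by apply: (disjP d XF); rewrite !inE eqxx orbT.
Qed.

Lemma notin_chainR (R A : {set 'I_n}) z : z \in R -> z \notin A -> A \notin chainR R.
Proof.
move=> zR zA; apply/negP => /chainR_props[_ sRA _].
by move: zA; rewrite (subsetP sRA).
Qed.
End Helpers3.

Lemma caseB n (E : {set {set 'I_n}}) (K : fieldType) (e f : {set 'I_n}) :
  hypergraph E -> e \in E -> f \in E -> [disjoint e & f] -> (2 < #|e|)%N ->
  ~ cohen_macaulay K (coloring_face E).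
Proof.
move=> hE eE fE def e3.
have ne0 : forall e, e \in E -> e != set0 by case: hE.
have n1 : forall e, e \in E -> #|e| != 1%N by case: hE => _ [_ [h _]].
have [x [x' [xe x'e nxx']]] := two_elems (ne0 _ eE) (n1 _ eE).
have [y [y' [yf y'f nyy']]] := two_elems (ne0 _ fE) (n1 _ fE).
have ye : y \notin e by apply/negP => ye; apply: (disjP def ye yf).
have y'e : y' \notin e by apply/negP => ye0; apply: (disjP def ye0 y'f).
have xf : x \notin f by apply/negP => xf; apply: (disjP def xe xf).
have x'f : x' \notin f by apply/negP => xf0; apply: (disjP def x'e xf0).
set R := e :|: f.
have eR : e \subset R by apply: subsetUl.
have fR : f \subset R by apply: subsetUr.
have yR : y \in R by rewrite (subsetP fR).
have y'R : y' \in R by rewrite (subsetP fR).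
set F := e |: chainR R.
have eT : e != setT by apply/negP => /eqP eT; move: ye; rewrite eT inE.
have chF : chainfam F.
  split.
  - move=> X; rewrite in_setU1 => /orP[/eqP->|/chainR_props[nT sRX _]]; first by rewrite ne0.
    rewrite nT andbT; apply/set0Pn; exists x; exact: (subsetP sRX _ (subsetP eR _ xe)).
  - move=> X Y; rewrite !in_setU1 => /orP[/eqP->|XF] /orP[/eqP->|YF].
    + by rewrite /comp subxx.
    + exact: comp_chainR eR YF.
    + by rewrite /comp orbC; exact: comp_chainR eR XF.
    + exact: chainR_comp XF YF.
have okF : forall X, X \in chainR R -> ok f X /\ ok e X.
  by move=> X /chainR_props[_ sRX _]; rewrite /ok (subset_trans fR sRX) (subset_trans eR sRX).
have hF : coloring_face E F.
  apply: (face_chainfam ne0 chF fE) => X; rewrite in_setU1 => /orP[/eqP->|/okF[] //].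
  by rewrite /ok disjoint_sym def orbT.
have notF (A : {set 'I_n}) z : z \in R -> z \notin A -> A != e -> A \notin F.
  by move=> zR zA nAe; rewrite in_setU1 negb_or nAe (notin_chainR zR zA).
have compR (A : {set 'I_n}) : A \subset R -> forall Y, Y \in chainR R -> comp A Y.
  by move=> sAR Y; apply: comp_chainR.
have x1 : [set x] \subset e by rewrite sub1set.
have ne1 : forall z : 'I_n, [set z] != e.
  by move=> z; apply/negP => /eqP ez; move: e3; rewrite -ez cards1.
have Lp : link (coloring_face E) F [set [set x]].
  apply: link1; first by apply: (notF _ y) => //; rewrite inE; apply/negP => /eqP yx; move: ye; rewrite yx xe.
  apply: (face_chainfam ne0 _ fE).
    apply: chainfam_add => //.
    + by apply/set0Pn; exists x; rewrite inE.
    + by apply/negP => /eqP eT'; have := ye; move: (in_setT y); rewrite -eT' inE => /eqP ->; rewrite xe.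
    + move=> Y; rewrite in_setU1 => /orP[/eqP->|]; first by rewrite /comp x1.
      by apply: compR; apply: subset_trans eR.
  apply: ok_add; first by rewrite /ok disjoint_sym disjoints1 xf orbT.
  move=> X; rewrite in_setU1 => /orP[/eqP->|/okF[] //].
  by rewrite /ok disjoint_sym def orbT.
set q := y |: e.
have eq' : e \subset q by apply: subsetU1.
have qR : q \subset R by rewrite subUset sub1set yR eR.
have Lq : link (coloring_face E) F [set q].
  apply: link1.
    apply: (notF _ y') => //; first by rewrite /q !inE negb_or eq_sym nyy' y'e.
    by apply/negP => /eqP qe; move: ye; rewrite -qe !inE eqxx.
  apply: (face_chainfam ne0 _ eE).
    apply: chainfam_add => //.
    + by apply/set0Pn; exists y; rewrite !inE eqxx.
    + apply/negP => /eqP qT; have := in_setT y'; rewrite -qT !inE eq_sym (negbTE nyy') /=.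
      by rewrite (negbTE y'e).
    + move=> Y; rewrite in_setU1 => /orP[/eqP->|]; first by rewrite /comp eq' orbT.
      by apply: compR.
  apply: ok_add; first by rewrite /ok eq'.
  move=> X; rewrite in_setU1 => /orP[/eqP->|/okF[] //].
  by rewrite /ok subxx.
set z2 := [set x; x'].
have z2e : z2 \subset e by rewrite subUset !sub1set xe x'e.
have nz : [set x] != z2.
  apply/negP => /eqP h; have := cards2 x x'; rewrite -/z2 -h cards1 nxx' => /eqP //.
have z2ne : z2 != e.
  by apply/negP => /eqP h; move: e3; rewrite -h /z2 cards2 nxx'.
have L2 : link (coloring_face E) F [set [set x]; z2].
  have yx : y \notin [set x] by rewrite inE; apply/negP => /eqP yx0; move: ye; rewrite yx0 xe.
  have yz : y \notin z2 by rewrite /z2 !inE negb_or; apply/andP; split; apply/negP => /eqP yx0; move: ye; rewrite yx0 ?xe ?x'e.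
  apply: link2.
  - by apply: (notF _ y).
  - by apply: (notF _ y).
  apply: (face_chainfam ne0 _ fE).
    apply: chainfam_add.
    + apply: chainfam_add => //.
      * by apply/set0Pn; exists x; rewrite !inE eqxx.
      * by apply/negP => /eqP zT; move: yz; rewrite zT inE.
      * move=> Y; rewrite in_setU1 => /orP[/eqP->|]; first by rewrite /comp z2e.
        by apply: compR; apply: subset_trans eR.
    + by apply/set0Pn; exists x; rewrite inE.
    + by apply/negP => /eqP zT; move: yx; rewrite zT inE.
    + move=> Y; rewrite !in_setU1 => /orP[/eqP->|/orP[/eqP->|]].
      * by rewrite /comp sub1set !inE eqxx.
      * by rewrite /comp x1.
      by apply: compR; apply: subset_trans eR.
  apply: ok_add; first by rewrite /ok disjoint_sym disjoints1 xf orbT.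
  apply: ok_add.
    rewrite /ok; apply/orP; right; apply: (disjointWr z2e).
    by rewrite disjoint_sym.
  move=> X; rewrite in_setU1 => /orP[/eqP->|/okF[] //].
  by rewrite /ok disjoint_sym def orbT.
apply: (@final n E K F (fun A => A \subset e) _ _ _ _ ne0 hF Lp x1 Lq _ nz L2).
  by apply/negP => /subsetP/(_ y); rewrite !inE eqxx => /(_ isT); rewrite (negbTE ye).
move=> A A' nAA' /link2_inv[nA nA' fc] PA; apply/negP => nPA'.
have [hne hcomp [h hE' hok]] := face_facts ne0 fc.
have AG : A \in A |: (A' |: F) by rewrite !in_setU1 eqxx.
have A'G : A' \in A |: (A' |: F) by rewrite !in_setU1 eqxx orbT.
have FG : forall X, X \in F -> X \in A |: (A' |: F) by move=> X XF; apply/setU1P; right; apply/setU1P; right.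
have cG : chainR R \subset A |: (A' |: F).
  by apply/subsetP => X XR; apply: FG; rewrite in_setU1 XR orbT.
have eF : e \in F by rewrite in_setU1 eqxx.
have nAe : A != e by apply/negP => /eqP Ae; move: nA; rewrite Ae eF.
have [a aA] : exists a, a \in A by apply/set0Pn; case/andP: (hne _ AG).
have eA' : e \subset A'.
  by case/orP: (hcomp _ _ A'G (FG _ eF)) => // sA'e; rewrite sA'e in nPA'.
have pA' : A' \proper R.
  apply: (@link_proper _ _ _ x).
  - by apply/negP => XR; move: nA'; rewrite in_setU1 XR orbT.
  - by case/andP: (hne _ A'G).
  - by move=> Y YR; apply: hcomp => //; apply: (subsetP cG).
have hR : h \subset R.
  apply: (@edge_subR _ _ _ x _ cG hok); [exact: ne0 | exact: n1].
have okhA : [disjoint h & A].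
  case/orP: (hok _ AG) => // shA.
  have he := sub_edge hE hE' eE (subset_trans shA PA).
  by move: nAe; rewrite eqEsubset PA -he shA.
have okhe : [disjoint h & e].
  case/orP: (hok _ (FG _ eF)) => // she.
  rewrite (sub_edge hE hE' eE she) in okhA.
  by exfalso; apply: (disjP okhA (PA _ aA) aA) || apply: (disjP okhA (subsetP PA _ aA) aA).
have hf : h \subset f.
  apply/subsetP => z zh; move: (subsetP hR _ zh); rewrite inE => /orP[ze|//].
  by exfalso; apply: (disjP okhe zh ze).
have hfe := sub_edge hE hE' fE hf.
rewrite hfe in hok.
have [w wA' we] : exists2 w, w \in A' & w \notin e by apply/subsetPn/negP.
have wf : w \in f by move: (subsetP (proper_sub pA') _ wA'); rewrite inE (negbTE we).
case/orP: (hok _ A'G) => sfA'.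
  by move: pA'; rewrite properE /R subUset eA' sfA' /= andbF.
by apply: (disjP sfA' wf wA').
Qed.

Lemma caseA n (E : {set {set 'I_n}}) (K : fieldType) (g : {set 'I_n}) a b :
  hypergraph E -> g \in E -> (2 < #|g|)%N -> a \in g -> b \notin g ->
  [set a; b] \in E -> ~ cohen_macaulay K (coloring_face E).
Proof.
move=> hE gE g3 ag bg eE.
have ne0 : forall e, e \in E -> e != set0 by case: hE.
have n1 : forall e, e \in E -> #|e| != 1%N by case: hE => _ [_ [h _]].
have nab : a != b by apply/negP => /eqP ab; move: bg; rewrite -ab ag.
have [y [yg nya]] : exists y, y \in g /\ y != a.
  have : ~~ (g \subset [set a]).
    by apply/negP => /subset_leq_card; rewrite cards1 leqNgt (ltn_trans _ g3).
  by case/subsetPn => y yg; rewrite inE => nya; exists y.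
have [z [zg nza nzy]] : exists z, [/\ z \in g, z != a & z != y].
  have : ~~ (g \subset [set a; y]).
    apply/negP => /subset_leq_card; rewrite cards2 leqNgt.
    by case: (a != y) => /=; rewrite ?g3 ?(ltn_trans _ g3).
  by case/subsetPn => w wg; rewrite !inE negb_or => /andP[h1 h2]; exists w.
have nyb : y != b by apply/negP => /eqP yb; move: bg; rewrite -yb yg.
have nzb : z != b by apply/negP => /eqP zb; move: bg; rewrite -zb zg.
set R := b |: g.
have gR : g \subset R by apply: subsetU1.
have aR : a \in R by rewrite (subsetP gR).
have yR : y \in R by rewrite (subsetP gR).
have zR : z \in R by rewrite (subsetP gR).
have bR : b \in R by rewrite !inE eqxx.
set e := [set a; b].
have eR : e \subset R by rewrite subUset !sub1set aR bR.
set F := chainR R.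
have chF : chainfam F.
  split.
  - move=> X /chainR_props[nT sRX _].
    rewrite nT andbT; apply/set0Pn; exists a; exact: (subsetP sRX _ aR).
  - by move=> X Y XF YF; exact: chainR_comp XF YF.
have okF : forall X, X \in F -> ok g X /\ ok e X.
  by move=> X /chainR_props[_ sRX _]; rewrite /ok (subset_trans gR sRX) (subset_trans eR sRX).
have hF : coloring_face E F.
  by apply: (face_chainfam ne0 chF gE) => X /okF[].
have notT (A : {set 'I_n}) w : w \notin A -> A != setT.
  by move=> wA; apply/negP => /eqP AT; move: wA; rewrite AT inE.
have ab1 : a \notin [set b] by rewrite inE.
have Lp : link (coloring_face E) F [set [set b]].
  apply: link1; first exact: (notin_chainR aR ab1).
  apply: (face_chainfam ne0 _ gE).
    apply: chainfam_add => //.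
    + by apply/set0Pn; exists b; rewrite inE.
    + exact: notT ab1.
    + by move=> Y; apply: comp_chainR; rewrite sub1set.
  apply: ok_add; first by rewrite /ok disjoint_sym disjoints1 bg orbT.
  by move=> X /okF[].
have ye : y \notin e by rewrite !inE negb_or nya nyb.
have Lq : link (coloring_face E) F [set e].
  apply: link1; first exact: (notin_chainR yR ye).
  apply: (face_chainfam ne0 _ eE).
    apply: chainfam_add => //.
    + by apply/set0Pn; exists a; rewrite !inE eqxx.
    + exact: notT ye.
    + by move=> Y; apply: comp_chainR.
  apply: ok_add; first by rewrite /ok subxx.
  by move=> X /okF[].
set r := y |: e.
have er : e \subset r by apply: subsetU1.
have rR : r \subset R by rewrite subUset sub1set yR eR.
have zr : z \notin r by rewrite !inE !negb_or nzy nza nzb.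
have ner : e != r by apply/negP => /eqP er'; move: ye; rewrite er' !inE eqxx.
have L2 : link (coloring_face E) F [set e; r].
  apply: link2; [exact: (notin_chainR yR ye) | exact: (notin_chainR zR zr) |].
  apply: (face_chainfam ne0 _ eE).
    apply: chainfam_add.
    + apply: chainfam_add => //.
      * by apply/set0Pn; exists y; rewrite !inE eqxx.
      * exact: notT zr.
      * by move=> Y; apply: comp_chainR.
    + by apply/set0Pn; exists a; rewrite !inE eqxx.
    + exact: notT ye.
    + move=> Y; rewrite in_setU1 => /orP[/eqP->|]; first by rewrite /comp er.
      by apply: comp_chainR.
  apply: ok_add; first by rewrite /ok subxx.
  apply: ok_add; first by rewrite /ok er.
  by move=> X /okF[].
have Pq : ~~ (e == [set b]).
  by apply/negP => /eqP eb; move: ab1; rewrite -eb !inE eqxx.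
apply: (@final n E K F (fun A => A == [set b]) _ _ _ _ ne0 hF Lp (eqxx _) Lq Pq ner L2).
move=> A A' nAA' /link2_inv[nA nA' fc] /eqP PA; exfalso.
have [hne hcomp [h hE' hok]] := face_facts ne0 fc.
have AG : A \in A |: (A' |: F) by rewrite !in_setU1 eqxx.
have A'G : A' \in A |: (A' |: F) by rewrite !in_setU1 eqxx orbT.
have FG : forall X, X \in F -> X \in A |: (A' |: F).
  by move=> X XF; apply/setU1P; right; apply/setU1P; right.
have cG : chainR R \subset A |: (A' |: F) by apply/subsetP => X XR; apply: FG.
have bA' : [set b] \subset A'.
  case/orP: (hcomp _ _ A'G AG); rewrite PA => // sA'b.
  have [w wA'] : exists w, w \in A' by apply/set0Pn; case/andP: (hne _ A'G).
  have eA' : A' = [set b].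
    apply/eqP; rewrite eqEsubset sA'b sub1set.
    by move: (subsetP sA'b _ wA'); rewrite inE => /eqP <-.
  by move: nAA'; rewrite PA eA' eqxx.
have nA'b : ~~ (A' \subset [set b]).
  apply/negP => sA'b; move: nAA'; rewrite PA.
  have eA : A' = [set b] by apply/eqP; rewrite eqEsubset sA'b bA'.
  by rewrite eA eqxx.
have pA' : A' \proper R.
  apply: (@link_proper _ _ _ a) => //.
  - by case/andP: (hne _ A'G).
  - by move=> Y YR; apply: hcomp => //; apply: (subsetP cG).
have hR : h \subset R.
  apply: (@edge_subR _ _ _ a _ cG hok); [exact: ne0 | exact: n1].
have bh : b \notin h.
  apply/negP => bh; case/orP: (hok _ AG); rewrite PA.
    move=> /subset_leq_card; rewrite cards1 leqNgt.
    have [u [v [uh vh nuv]]] := two_elems (ne0 _ hE') (n1 _ hE').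
    by move: (ne0 _ hE') (n1 _ hE'); rewrite -card_gt0; case: #|h| => [|[|]].
  by rewrite disjoint_sym disjoints1 bh.
have hg : h \subset g.
  apply/subsetP => w wh; move: (subsetP hR _ wh); rewrite !inE => /orP[/eqP wb|//].
  by move: bh; rewrite -wb wh.
have hge := sub_edge hE hE' gE hg.
rewrite hge in hok.
have bA'' : b \in A' by rewrite (subsetP bA') // inE.
have [w wA' wb] := subsetPn nA'b.
have wg : w \in g by move: (subsetP (proper_sub pA') _ wA'); rewrite /R in_setU1; case/orP => // /eqP wbb; move: wb; rewrite wbb inE eqxx.
case/orP: (hok _ A'G) => sgA'.
  by move: pA'; rewrite properE /R subUset sub1set bA'' sgA' /= andbF.
by apply: (disjP sgA' wg wA').
Qed.

Theorem mainTheorem3 (n : nat) (E : {set {set 'I_n}}) :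
  hypergraph E ->
  (exists2 e, e \in E & 2 < #|e|) ->
  (exists e, exists f, [/\ e \in E, f \in E & [disjoint e & f]]) ->
  forall K : fieldType, ~ cohen_macaulay K (coloring_face E).
Proof.
move=> hE [g gE g3] [e [f [eE fE def]]] K.
have ne0 : forall e, e \in E -> e != set0 by case: hE.
have n1 : forall e, e \in E -> #|e| != 1%N by case: hE => _ [_ [h _]].
case: (ltnP 2 #|e|) => e3; first exact: (caseB hE eE fE def e3).
case: (ltnP 2 #|f|) => f3; first by apply: (caseB hE fE eE _ f3); rewrite disjoint_sym.
case: (boolP [disjoint g & e]) => dge; first exact: (caseB hE gE eE dge g3).
case: (boolP [disjoint g & f]) => dgf; first exact: (caseB hE gE fE dgf g3).
have [a] : exists a, a \in g :&: e by apply/set0Pn; rewrite setI_eq0.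
rewrite inE => /andP[ag ae].
have [b be nba] : exists2 b, b \in e & b != a.
  have : ~~ (e \subset [set a]).
    apply/negP => /subset_leq_card; rewrite cards1 => h.
    by move: (ne0 _ eE) (n1 _ eE); rewrite -card_gt0; move: h; case: #|e| => [|[|]].
  by case/subsetPn => b be; rewrite inE => nba; exists b.
have eab : e = [set a; b].
  apply/eqP; rewrite eq_sym eqEcard subUset !sub1set ae be /= cards2 eq_sym nba.
  by [].
have bg : b \notin g.
  apply/negP => bg; have sg : e \subset g by rewrite eab subUset !sub1set ag bg.
  by move: e3; rewrite (sub_edge hE eE gE sg) leqNgt g3.
by apply: (caseA hE gE g3 ag bg); rewrite -eab.
Qed.
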